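(* In the oligopoly game below, fix $\boldsymbol\sigma\in\{-1,1\}^n$ and let $N_+=\{i:\sigma_i=1\}$, $N_-=\{i:\sigma_i=-1\}$. There exists an equilibrium $(\mathbf A^*,\mathbf q^* )$ with $\mathbf a_i^*=\sigma_i\boldsymbol\beta$ for every $i$ if and only if $$(2+\alpha)-\frac{2+(n+1)\alpha}{2(1+\alpha)}\min_{j\in N_-}\gamma_j\;\le\;\boldsymbol\sigma^\top\boldsymbol\gamma\;\le\;(2+\alpha)+\frac{2+(n+1)\alpha}{2(1+\alpha)}\min_{j\in N_+}\gamma_j,$$ with the convention that the minimum over the empty set is $+\infty$. In such an equilibrium the output profile is uniquely determined as $$\mathbf q^*=\frac{\boldsymbol\gamma}{2+\alpha}-\phi(\boldsymbol\sigma)\,\boldsymbol\sigma,\qquad \phi(\boldsymbol\sigma)=\frac{\alpha(\boldsymbol\sigma^\top\boldsymbol\gamma-(2+\alpha))}{(2+\alpha)(2+(n+1)\alpha)}.$$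
   Context: Model: integers $n\ge2$, $m\ge2$; $\alpha>0$, $\boldsymbol\beta\in\mathbb R^m$ with $\|\boldsymbol\beta\|_2=1$, $\boldsymbol\gamma\in\mathbb R^n$ with all $\gamma_i>0$. Firm $i$ chooses a unit vector $\mathbf a_i\in\mathbb R^m$ and $q_i\ge0$, earning $\Pi_i=\alpha q_i\mathbf a_i^\top(\boldsymbol\beta-\sum_{j\ne i}q_j\mathbf a_j)-(1+\alpha)q_i^2+\gamma_iq_i$. $\mathbf A=[\mathbf a_1,\dots,\mathbf a_n]$. An equilibrium is a profile $(\mathbf A^*,\mathbf q^* )$ in which each $(\mathbf a_i^*,q_i^* )$ maximizes $\Pi_i$ over unit $\mathbf a_i$ and $q_i\ge 0$ given the others' choices. *)

(* Defs.v *)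
From HB Require Import structures.
From mathcomp Require Import all_boot all_order all_algebra.
From mathcomp Require Import reals.
Set Implicit Arguments. Unset Strict Implicit. Unset Printing Implicit Defensive.
Import Order.TTheory GRing.Theory Num.Theory.
Local Open Scope ring_scope.

Definition dot (R : realType) (m : nat) (u v : 'cV[R]_m) : R :=
  \sum_(k < m) u k 0 * v k 0.

Definition payoff (R : realType) (m n : nat) (alpha : R) (beta : 'cV[R]_m)
  (gamma : 'I_n -> R) (A : 'M[R]_(m, n)) (q : 'I_n -> R) (i : 'I_n)
  (a : 'cV[R]_m) (x : R) : R :=
  alpha * x * dot a (beta - \sum_(j < n | j != i) q j *: col j A)
  - (1 + alpha) * x ^+ 2 + gamma i * x.

Definition is_equilibrium (R : realType) (m n : nat) (alpha : R)
  (beta : 'cV[R]_m) (gamma : 'I_n -> R) (A : 'M[R]_(m, n)) (q : 'I_n -> R) :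
  Prop :=
  forall i : 'I_n,
    [/\ dot (col i A) (col i A) = 1, 0 <= q i &
      forall (a : 'cV[R]_m) (x : R), dot a a = 1 -> 0 <= x ->
        payoff alpha beta gamma A q i a x
        <= payoff alpha beta gamma A q i (col i A) (q i)].

Definition phi (R : realType) (n : nat) (alpha : R) (gamma sigma : 'I_n -> R)
  : R :=
  alpha * (\sum_(i < n) sigma i * gamma i - (2 + alpha))
  / ((2 + alpha) * (2 + (n%:R + 1) * alpha)).

(* Main.v *)
Require Import Defs.
From HB Require Import structures.
From mathcomp Require Import all_boot all_order all_algebra.
From mathcomp Require Import reals.
Import Order.TTheory GRing.Theory Num.Theory.
From mathcomp.algebra_tactics Require Import ring lra.
Local Open Scope ring_scope.


Section S.
Variable R : realType.

Lemma dotZr m (u v : 'cV[R]_m) c : dot u (c *: v) = c * dot u v.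
Proof. rewrite /dot mulr_sumr; apply eq_bigr => k _; rewrite mxE; ring. Qed.

Lemma dotZl m (u v : 'cV[R]_m) c : dot (c *: u) v = c * dot u v.
Proof. rewrite /dot mulr_sumr; apply eq_bigr => k _; rewrite mxE; ring. Qed.

Lemma dot_cs m (a b : 'cV[R]_m) : dot a a = 1 -> dot b b = 1 -> -1 <= dot a b <= 1.
Proof.
move=> ha hb.
have h1 : 0 <= \sum_(k < m) (a k 0 - b k 0) ^+ 2 by apply: sumr_ge0 => k _; apply: sqr_ge0.
have h2 : 0 <= \sum_(k < m) (a k 0 + b k 0) ^+ 2 by apply: sumr_ge0 => k _; apply: sqr_ge0.
have e1 : \sum_(k < m) (a k 0 - b k 0) ^+ 2 = dot a a + dot b b - 2 * dot a b.
  rewrite /dot mulr_sumr -big_split -sumrB; apply eq_bigr => k _ /=; ring.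
have e2 : \sum_(k < m) (a k 0 + b k 0) ^+ 2 = dot a a + dot b b + 2 * dot a b.
  rewrite /dot mulr_sumr -!big_split; apply eq_bigr => k _ /=; ring.
rewrite e1 ha hb in h1; rewrite e2 ha hb in h2.
apply/andP; split; lra.
Qed.

Lemma nec (al g u q : R) : 0 < al -> 0 < g -> 0 <= q ->
 (forall x, 0 <= x -> x*(g+u) - (1+al)*x^+2 <= q*(g+u) - (1+al)*q^+2) ->
 (forall x, 0 <= x -> x*(g-u) - (1+al)*x^+2 <= q*(g+u) - (1+al)*q^+2) ->
 0 <= u /\ 2*(1+al)*q = g+u.
Proof.
move=> ha hg hq H1 H2.
have hu : 0 <= u.
  rewrite leNgt; apply/negP => hu.
  set y := (g - u) / (2 * (1 + al)).
  have hy : 2 * (1 + al) * y = g - u by rewrite /y; field; lra.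
  have y0 : 0 < y by rewrite /y divr_gt0 //; lra.
  have := H2 y (ltW y0).
  have e : y * (g - u) = 2 * (1 + al) * y ^+ 2 by rewrite -hy; ring.
  rewrite e.
  have [->|qp] := eqVneq q 0.
    move=> h; have : 0 < (1 + al) * y ^+ 2 by apply: mulr_gt0; [lra | exact: exprn_gt0].
    lra.
  have qp' : 0 < q by rewrite lt_def qp hq.
  have e2 : q * (g + u) = 2 * (1 + al) * y * q + 2 * u * q by rewrite (_ : g = 2 * (1 + al) * y + u); [ring | lra].
  rewrite e2 => h.
  have : 0 <= (1 + al) * (y - q) ^+ 2 by apply: mulr_ge0; [lra | exact: sqr_ge0].
  have : u * q < 0 by rewrite pmulr_llt0.
  move=> h3 h4. nra.
split=> //.
set z := (g + u) / (2 * (1 + al)).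
have hz : 2 * (1 + al) * z = g + u by rewrite /z; field; lra.
have z0 : 0 <= z by rewrite /z divr_ge0 //; lra.
have := H1 z z0 => h.
have e : z * (g + u) = 2 * (1 + al) * z ^+ 2 by rewrite -hz; ring.
have e2 : q * (g + u) = 2 * (1 + al) * z * q by rewrite -hz; ring.
rewrite e e2 in h.
have hsq : (z - q) ^+ 2 = 0.
  apply/le_anti/andP; split; last exact: sqr_ge0.
  nra.
move/eqP: hsq; rewrite sqrf_eq0 subr_eq0 => /eqP hzq.
by rewrite -hzq.
Qed.

Lemma suf (al g u q d x : R) : 0 < al -> 0 <= u -> 2*(1+al)*q = g+u ->
  -1 <= d <= 1 -> 0 <= x ->
  x*(g+u*d) - (1+al)*x^+2 <= q*(g+u) - (1+al)*q^+2.
Proof.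
move=> ha hu hq /andP[d1 d2] hx.
have h1 : 0 <= x * (u * (1 - d)) by apply: mulr_ge0 => //; apply: mulr_ge0; lra.
have h2 : 0 <= (1 + al) * (q - x) ^+ 2 by apply: mulr_ge0; [lra | exact: sqr_ge0].
have e : g = 2 * (1 + al) * q - u by lra.
rewrite e. nra.
Qed.

Lemma link (al s w q g : R) : 0 < al -> (2+al)*q = g + al*s*w ->
  (0 <= s*al*w + al*q <-> 0 <= 2*(1+al)*s*w + g).
Proof.
move=> ha e.
have e1 : s*al*w + al*q = al*(s*w+q) by ring.
have e2 : 2*(1+al)*s*w + g = (2+al)*(s*w + q).
  by rewrite (_ : g = (2+al)*q - al*s*w); [ring | lra].
rewrite e1 e2 !pmulr_rge0 //; lra.
Qed.

Lemma ineq_eq (al D c g w sg s P : R) : 0 < al -> 0 < D -> c = D/(2*(1+al)) ->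
  D*w = P - sg -> (s = 1 \/ s = -1) ->
  (0 <= 2*(1+al)*s*w + g <->
   ((s = -1 -> P - c*g <= sg) /\ (s = 1 -> sg <= P + c*g))).
Proof.
move=> ha hD hc hw hs.
have c0 : 0 < c by rewrite hc divr_gt0 //; lra.
have e : c * (2*(1+al)*s*w + g) = s*(P - sg) + c*g.
  by rewrite -hw hc; field; lra.
rewrite -(pmulr_rge0 _ c0) e.
case: hs => ->; split.
- move=> h; split=> // h1; [lra | lra].
- by move=> [_ h]; have := h erefl; lra.
- by move=> h; split=> // h1; lra.
- by move=> [h _]; have := h erefl; lra.
Qed.

Variables (n m : nat) (alpha : R) (beta : 'cV[R]_m) (gamma sigma : 'I_n -> R).

Lemma payoffE (A : 'M[R]_(m, n)) (q : 'I_n -> R) i a (x : R) :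
  (forall j, col j A = sigma j *: beta) ->
  payoff alpha beta gamma A q i a x =
  alpha * x * ((1 - \sum_(j < n | j != i) q j * sigma j) * dot a beta)
  - (1 + alpha) * x ^+ 2 + gamma i * x.
Proof.
move=> hA; rewrite /payoff.
have -> : \sum_(j < n | j != i) q j *: col j A
          = (\sum_(j < n | j != i) q j * sigma j) *: beta.
  by rewrite scaler_suml; apply eq_bigr => j _; rewrite hA scalerA.
by rewrite -{1}(scale1r beta) -scalerBl dotZr.
Qed.

Lemma player (A : 'M[R]_(m, n)) (q : 'I_n -> R) i :
  (forall j, col j A = sigma j *: beta) -> (sigma i = 1 \/ sigma i = -1) ->
  0 < alpha -> 0 < gamma i -> dot beta beta = 1 ->
  ((0 <= q i /\ forall a (x : R), dot a a = 1 -> 0 <= x ->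
      payoff alpha beta gamma A q i a x <= payoff alpha beta gamma A q i (col i A) (q i))
   <-> (0 <= sigma i * alpha * (1 - \sum_(j < n | j != i) q j * sigma j) /\
        2*(1+alpha)*q i = gamma i + sigma i * alpha * (1 - \sum_(j < n | j != i) q j * sigma j))).
Proof.
move=> hA hs ha hg hb.
set S := \sum_(j < n | j != i) q j * sigma j.
set u := sigma i * alpha * (1 - S).
have ss : sigma i * sigma i = 1 by case: hs => ->; ring.
have pE : forall a (x : R), payoff alpha beta gamma A q i a x
   = x*(gamma i + u*(sigma i * dot a beta)) - (1+alpha)*x^+2.
  move=> a x; rewrite payoffE // /u.
  have -> : sigma i * alpha * (1 - S) * (sigma i * dot a beta)
     = (sigma i * sigma i) * alpha * (1 - S) * dot a beta by ring.
  rewrite -/S ss; ring.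
have key : payoff alpha beta gamma A q i (col i A) (q i)
    = q i * (gamma i + u) - (1+alpha) * q i ^+ 2.
  by rewrite pE hA dotZl hb mulr1 ss mulr1.
split.
- move=> [hq H]; apply: (nec _ _ _ _ ha hg hq).
  + move=> x hx; have := H (sigma i *: beta) x.
    rewrite dotZl dotZr hb mulr1 ss -key pE dotZl hb mulr1 ss mulr1.
    by move=> h; apply: h.
  + move=> x hx; have := H (- sigma i *: beta) x.
    rewrite dotZl dotZr hb mulr1 mulNr mulrN opprK ss -key pE dotZl hb mulr1.
    rewrite mulrN ss mulrN1.
    by move=> h; apply: h.
- move=> [hu hq].
  have hq0 : 0 <= q i.
    have : 0 < 2 * (1 + alpha) * q i by rewrite hq; lra.
    rewrite pmulr_rgt0; [exact: ltW | lra].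
  split=> // a x ha1 hx.
  rewrite pE key; apply: suf => //.
  have /andP[d1 d2] := dot_cs _ _ _ ha1 hb.
  by case: hs => ->; apply/andP; split; lra.
Qed.

Lemma eqchar (A : 'M[R]_(m, n)) (q : 'I_n -> R) :
  (forall j, col j A = sigma j *: beta) -> (forall i, sigma i = 1 \/ sigma i = -1) ->
  0 < alpha -> (forall i, 0 < gamma i) -> dot beta beta = 1 ->
  (is_equilibrium alpha beta gamma A q <->
   forall i, 0 <= sigma i * alpha * (1 - \sum_(j < n) q j * sigma j) + alpha * q i /\
     (2+alpha)*q i = gamma i + alpha * sigma i * (1 - \sum_(j < n) q j * sigma j)).
Proof.
move=> hA hs ha hg hb.
set Q := \sum_(j < n) q j * sigma j.
have Ssp : forall i, \sum_(j < n | j != i) q j * sigma j = Q - q i * sigma i.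
  by move=> i; rewrite /Q [in RHS](bigD1 i) //= addrAC subrr add0r.
have E : forall i, sigma i * alpha * (1 - (Q - q i * sigma i))
    = sigma i * alpha * (1 - Q) + alpha * q i.
  by move=> i; case: (hs i) => ->; ring.
have dA : forall i, dot (col i A) (col i A) = 1.
  by move=> i; rewrite hA dotZl dotZr hb mulr1; case: (hs i) => ->; ring.
split.
- move=> H i; case: (H i) => _ hq Hi.
  have := (player A q i hA (hs i) ha (hg i) hb).1 (conj hq Hi).
  rewrite Ssp E => -[h1 h2]; split => //.
  apply/eqP; rewrite -subr_eq0; apply/eqP.
  transitivity (2 * (1 + alpha) * q i - (gamma i + (sigma i * alpha * (1 - Q) + alpha * q i))).
    ring.
  by rewrite h2 subrr.
- move=> H i; have [h1 h2] := H i.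
  have := (player A q i hA (hs i) ha (hg i) hb).2.
  rewrite Ssp E => P.
  have [|hq Hi] := P.
    split=> //; apply/eqP; rewrite -subr_eq0; apply/eqP.
    transitivity ((2 + alpha) * q i - (gamma i + alpha * sigma i * (1 - Q))).
      ring.
    by rewrite h2 subrr.
  by split.
Qed.

Lemma main :
  (2 <= n)%N -> (2 <= m)%N -> 0 < alpha -> dot beta beta = 1 ->
  (forall i, 0 < gamma i) ->
  (forall i, sigma i = 1 \/ sigma i = -1) ->
  let sg := \sum_(i < n) sigma i * gamma i in
  let c := (2 + (n%:R + 1) * alpha) / (2 * (1 + alpha)) in
  ((exists (A : 'M[R]_(m, n)) (q : 'I_n -> R),
      is_equilibrium alpha beta gamma A q /\
      (forall i, col i A = sigma i *: beta))
   <->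
   ((forall j, sigma j = -1 -> (2 + alpha) - c * gamma j <= sg) /\
    (forall j, sigma j = 1 -> sg <= (2 + alpha) + c * gamma j)))
  /\
  (forall (A : 'M[R]_(m, n)) (q : 'I_n -> R),
      is_equilibrium alpha beta gamma A q ->
      (forall i, col i A = sigma i *: beta) ->
      forall i, q i = gamma i / (2 + alpha) - phi alpha gamma sigma * sigma i).
Proof.
move=> hn hm ha hb hg hs sg c.
pose D := 2 + (n%:R + 1) * alpha.
have hD : 0 < D.
  have h0 : (0:R) <= n%:R by apply: ler0n.
  rewrite /D; apply: addr_gt0; first lra.
  by apply: mulr_gt0 => //; lra.
have h2a : 0 < 2 + alpha by lra.
have hc : c = D / (2 * (1 + alpha)) by [].
have hDdef : D = 2 + (n%:R + 1) * alpha by [].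
have hDn : 2 + (n%:R + 1) * alpha != 0 by rewrite -hDdef lt0r_neq0.
have h2n : 2 + alpha != 0 by rewrite lt0r_neq0.
have hsg : \sum_(i < n) sigma i * gamma i = sg by [].
clearbody D sg c.
have solveQ : forall q : 'I_n -> R,
   (forall i, (2+alpha)*q i = gamma i + alpha*sigma i*(1 - \sum_(j < n) q j * sigma j)) ->
   \sum_(j < n) q j * sigma j = (sg + n%:R*alpha)/D.
  move=> q Hq; set Q := \sum_(j < n) q j * sigma j.
  have hsum : (2+alpha)*Q = sg + n%:R*alpha*(1-Q).
    rewrite (_ : (2+alpha)*Q = \sum_(j < n) (2+alpha)*(q j * sigma j)); last by rewrite mulr_sumr.
    transitivity (\sum_(j < n) (sigma j * gamma j + alpha*(1-Q))).
      apply eq_bigr => j _; rewrite mulrA Hq -/Q.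
      by case: (hs j) => ->; ring.
    by rewrite big_split /= sumr_const card_ord -mulr_natl hsg; ring.
  have hQD : Q * D = sg + n%:R * alpha.
    apply/eqP; rewrite -subr_eq0; apply/eqP.
    transitivity ((2+alpha)*Q - (sg + n%:R*alpha*(1-Q))).
      by rewrite hDdef; ring.
    by rewrite hsum subrr.
  by rewrite -hQD mulfK // lt0r_neq0.
split.
- split.
  + move=> [A [q [Heq hA]]].
    have H := (eqchar A q hA hs ha hg hb).1 Heq.
    have hQ := solveQ q (fun i => (H i).2).
    have hw : D * (1 - \sum_(j < n) q j * sigma j) = (2 + alpha) - sg.
      by rewrite hQ hDdef; field.
    split.
    * move=> j hj; have [h1 h2] := H j.
      have := (link _ _ _ _ _ ha h2).1 h1.
      by move/(ineq_eq _ _ _ _ _ _ _ _ ha hD hc hw (hs j)) => [/(_ hj) ].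
    * move=> j hj; have [h1 h2] := H j.
      have := (link _ _ _ _ _ ha h2).1 h1.
      by move/(ineq_eq _ _ _ _ _ _ _ _ ha hD hc hw (hs j)) => [_ /(_ hj) ].
  + move=> [Hm Hp].
    pose Q0 := (sg + n%:R*alpha)/D.
    pose q : 'I_n -> R := fun j => (gamma j + alpha*sigma j*(1-Q0))/(2+alpha).
    pose A : 'M[R]_(m, n) := \matrix_(k, j) (sigma j * beta k 0).
    have hA : forall j, col j A = sigma j *: beta.
      by move=> j; apply/matrixP => k l; rewrite !mxE (ord1 l).
    have hQ : \sum_(j < n) q j * sigma j = Q0.
      transitivity (\sum_(j < n) (sigma j * gamma j + alpha*(1-Q0)) / (2+alpha)).
        apply eq_bigr => j _; rewrite /q.
        by case: (hs j) => ->; field; apply: lt0r_neq0.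
      rewrite -mulr_suml big_split /= sumr_const card_ord -mulr_natl hsg /Q0 hDdef.
      by field; rewrite hDn h2n.
    have hw : D * (1 - Q0) = (2 + alpha) - sg.
      by rewrite /Q0 hDdef; field.
    exists A, q; split => //.
    apply/(eqchar A q hA hs ha hg hb) => i.
    rewrite hQ.
    have h2 : (2 + alpha) * q i = gamma i + alpha * sigma i * (1 - Q0).
      by rewrite /q mulrC divfK.
    split => //.
    apply/(link _ _ _ _ _ ha h2).
    apply/(ineq_eq _ _ _ _ _ _ _ _ ha hD hc hw (hs i)).
    by split; [apply: Hm | apply: Hp].
- move=> A q Heq hA i.
  have H := (eqchar A q hA hs ha hg hb).1 Heq.
  have hQ := solveQ q (fun i => (H i).2).
  have [_ h2] := H i.
  have -> : q i = (gamma i + alpha * sigma i * (1 - \sum_(j < n) q j * sigma j)) / (2 + alpha).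
    by rewrite -h2 [(2 + alpha) * _]mulrC mulfK.
  rewrite hQ /phi hsg hDdef.
  by field; rewrite hDn h2n.
Qed.
End S.

Theorem proposition4 (R : realType) (n m : nat) (alpha : R)
  (beta : 'cV[R]_m) (gamma : 'I_n -> R) (sigma : 'I_n -> R) :
  (2 <= n)%N -> (2 <= m)%N -> 0 < alpha -> dot beta beta = 1 ->
  (forall i, 0 < gamma i) ->
  (forall i, sigma i = 1 \/ sigma i = -1) ->
  let sg := \sum_(i < n) sigma i * gamma i in
  let c := (2 + (n%:R + 1) * alpha) / (2 * (1 + alpha)) in
  ((exists (A : 'M[R]_(m, n)) (q : 'I_n -> R),
      is_equilibrium alpha beta gamma A q /\
      (forall i, col i A = sigma i *: beta))
   <->
   ((forall j, sigma j = -1 -> (2 + alpha) - c * gamma j <= sg) /\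
    (forall j, sigma j = 1 -> sg <= (2 + alpha) + c * gamma j)))
  /\
  (forall (A : 'M[R]_(m, n)) (q : 'I_n -> R),
      is_equilibrium alpha beta gamma A q ->
      (forall i, col i A = sigma i *: beta) ->
      forall i, q i = gamma i / (2 + alpha) - phi alpha gamma sigma * sigma i).
Proof. exact: main. Qed.
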